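(* Let $B$ be an $(n,n-1)$-blocker for a convex $n$-gon $C$ with vertices $0,\dots,n-1$ (indices mod $n$). If the ear-cover $(i-1,i+1)$ does not belong to $B$ and $\deg_B(i)=2$, then $B\setminus\{i\}$ is a minimum-sized blocker (a blocker with exactly $(n-1)-2=n-3$ edges) for the $(n-1)$-gon $C\setminus\{i\}$.
   Context: An edge $(i,j)$ is the segment between vertices $i,j$; boundary edges are $(i,i+1)$, diagonals are the other edges. Two edges cross if they share an interior point. A triangulation is a maximal set of pairwise non-crossing diagonals. A blocker is a set $B$ of diagonals having a diagonal in common with every triangulation; it is saturated if for every $e\in B$, $B\setminus\{e\}$ is not a blocker. An $(n,k)$-blocker is a saturated blocker of size $k$ for a convex $n$-gon. Every blocker of a convex $N$-gon has at least $N-2$ edges; those with exactly $N-2$ are minimum-sized. $(i-1,i+1)$ is the ear-cover covering $i$; $\deg_B(i)$ is the number of edges of $B$ incident to $i$. $C\setminus\{i\}$ is the convex polygon obtained by deleting vertex $i$ (so $(i-1,i+1)$ becomes a side), and $B\setminus\{i\}$ is obtained from $B$ by removing all edges incident to $i$ and the edge $(i-1,i+1)$. *)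

(* Defs.v *)
From mathcomp Require Import all_boot all_order.
Set Implicit Arguments. Unset Strict Implicit. Unset Printing Implicit Defensive.

(* Vertices of the convex n-gon C are 0..n-1 (type 'I_n) in cyclic order.
   More generally we consider the convex polygon whose vertex set is a
   subset V of 'I_n (cyclic order inherited); C itself is V = [set: 'I_n],
   and C \ {i} is V = [set: 'I_n] :\ i.
   An edge is encoded as a pair (a, b) with a < b. *)
Section Polygon.
Variable n : nat.
Notation vert := ('I_n).
Notation edge := ('I_n * 'I_n)%type.

Definition mkE (a b : vert) : edge := if a < b then (a, b) else (b, a).

(* two edges cross (share an interior point) iff their endpoints strictly
   interleave in the cyclic order *)
Definition cross (e f : edge) : bool :=
  ((e.1 < f.1) && (f.1 < e.2) && (e.2 < f.2)) ||
  ((f.1 < e.1) && (e.1 < f.2) && (f.2 < e.2)).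

(* (a,b) is a diagonal of the convex polygon with vertex set V:
   a, b in V, a < b, and (a,b) is not a side, i.e. there are vertices of V
   strictly on both sides of it. *)
Definition is_diag (V : {set vert}) (e : edge) : bool :=
  [&& e.1 \in V, e.2 \in V, e.1 < e.2,
      [exists v in V, (e.1 < v) && (v < e.2)] &
      [exists w in V, (w < e.1) || (e.2 < w)]].

Definition triangulation (V : {set vert}) (T : {set edge}) : Prop :=
  [/\ {subset T <= is_diag V},
      (forall e f, e \in T -> f \in T -> ~~ cross e f) &
      (forall d, is_diag V d -> d \notin T -> exists2 e, e \in T & cross d e)].

Definition blocker (V : {set vert}) (B : {set edge}) : Prop :=
  {subset B <= is_diag V} /\
  (forall T, triangulation V T -> exists2 e, e \in B & e \in T).

Definition saturated (V : {set vert}) (B : {set edge}) : Prop :=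
  blocker V B /\ (forall e, e \in B -> ~ blocker V (B :\ e)).

Definition nk_blocker (k : nat) (B : {set edge}) : Prop :=
  saturated [set: vert] B /\ #|B| = k.

Lemma vshift_proof (i : vert) (k : nat) : (i + k) %% n < n.
Proof. by apply: ltn_pmod; apply: leq_ltn_trans (ltn_ord i). Qed.
Definition vshift (i : vert) (k : nat) : vert := Ordinal (vshift_proof i k).
Definition vpred (i : vert) : vert := vshift i (n - 1).
Definition vsucc (i : vert) : vert := vshift i 1.

Definition ear (i : vert) : edge := mkE (vpred i) (vsucc i).

Definition deg (B : {set edge}) (i : vert) : nat :=
  #|[set e in B | (e.1 == i) || (e.2 == i)]|.

Definition del_vertex (B : {set edge}) (i : vert) : {set edge} :=
  [set e in B | [&& e.1 != i, e.2 != i & e != ear i]].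
End Polygon.

(* Main.v *)
Require Import Defs.
From mathcomp Require Import all_boot all_order zify.
Set Implicit Arguments. Unset Strict Implicit. Unset Printing Implicit Defensive.

Section S.
Variable n : nat.
Variable i : 'I_n.
Hypothesis n4 : 4 <= n.

Lemma vpredE : nat_of_ord (vpred i) = if i == 0 :> nat then n - 1 else i - 1.
Proof.
rewrite /vpred /vshift /=; have hi := ltn_ord i.
case: eqP => [->|h]; first by rewrite add0n modn_small //; lia.
rewrite (_ : i + (n-1) = (i-1) + n); last lia.
by rewrite modnDr modn_small //; lia.
Qed.

Lemma vsuccE : nat_of_ord (vsucc i) = if i == n - 1 :> nat then 0 else i + 1.
Proof.
rewrite /vsucc /vshift /=; have hi := ltn_ord i.
case: eqP => [h|h]; first by rewrite (_ : i + 1 = n) ?modnn //; lia.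
by rewrite modn_small //; lia.
Qed.

Lemma earP : let a := nat_of_ord (ear i).1 in let b := nat_of_ord (ear i).2 in
  (a + 2 = b /\ a < i /\ i < b) \/ (i = 0 :> nat /\ a = 1 /\ b = n - 1)
  \/ (i = n - 1 :> nat /\ a = 0 /\ b = n - 2).
Proof.
rewrite /ear /mkE; have hi := ltn_ord i.
move: (vpredE) (vsuccE); case: (nat_of_ord i =P 0) => h0; case: (nat_of_ord i =P n - 1) => h1.
all: move: (vpred i) (vsucc i) => p s E1 E2; case: ifP => /= h; lia.
Qed.

Lemma edge_eq (e f : 'I_n * 'I_n) : nat_of_ord e.1 = f.1 -> nat_of_ord e.2 = f.2 -> e = f.
Proof.
case: e f => [x y] [x' y'] /= h1 h2; congr pair; exact: val_inj.
Qed.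

Lemma ear_diag : is_diag [set: 'I_n] (ear i).
Proof.
have E := earP; move: E; rewrite /=.
have hi := ltn_ord i.
case: (ear i) => x y /= E; have hx := ltn_ord x; have hy := ltn_ord y.
rewrite /is_diag /= !inE /=.
have n0 : 0 < n by lia.
have n1 : n - 1 < n by lia.
have n2 : 2 < n by lia.
have n11 : 1 < n by lia.
apply/and3P; split; [lia| |].
  case: E => [E|[E|E]].
    by apply/existsP; exists i; rewrite inE; apply/andP; lia.
    by apply/existsP; exists (Ordinal n2); rewrite inE; apply/andP => /=; lia.
  by apply/existsP; exists (Ordinal n11); rewrite inE; apply/andP => /=; lia.
case: E => [E|[E|E]].
  case: (posnP x) => hx0.
    by apply/existsP; exists (Ordinal n1); rewrite inE; apply/orP => /=; lia.
  by apply/existsP; exists (Ordinal n0); rewrite inE; apply/orP => /=; lia.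
  by apply/existsP; exists (Ordinal n0); rewrite inE; apply/orP => /=; lia.
by apply/existsP; exists (Ordinal n1); rewrite inE; apply/orP => /=; lia.
Qed.

Lemma diag_del (e : 'I_n * 'I_n) : is_diag [set: 'I_n] e -> e.1 != i -> e.2 != i ->
  e != ear i -> is_diag ([set: 'I_n] :\ i) e.
Proof.
have E := earP; move: E; rewrite /=.
have hi := ltn_ord i.
move=> E /and5P[_ _ hxy /existsP[v /andP[_ /andP[hv1 hv2]]] /existsP[w /andP[_ hw]]] h1 h2 hne.
have hne' : ~ (nat_of_ord e.1 = (ear i).1 /\ nat_of_ord e.2 = (ear i).2).
  by case=> ? ?; move/eqP: hne; apply; apply: edge_eq.
move: hne' E hxy hv1 hv2 hw h1 h2; clear hne.
case: (ear i) => a b /=; case: e => x y /=.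
have ha := ltn_ord a; have hb := ltn_ord b; have hx := ltn_ord x; have hy := ltn_ord y; have hv := ltn_ord v; have hw := ltn_ord w.
move=> hne E hxy hv1 hv2 hw' h1 h2.
rewrite /is_diag /= !inE h1 h2 hxy /=.
have h1' : nat_of_ord x <> i by move=> h; move/eqP: h1; apply; exact: val_inj.
have h2' : nat_of_ord y <> i by move=> h; move/eqP: h2; apply; exact: val_inj.
apply/andP; split.
  case: (eqVneq (x.+1) i) => hx1.
    case: (eqVneq (y.-1) i) => hy1; first by exfalso; lia.
    have hk : y.-1 < n by lia.
    apply/existsP; exists (Ordinal hk); rewrite !inE andbT /=.
    apply/andP; split; first by apply/eqP => /(congr1 val) /=; lia.
    apply/andP; lia.
  have hk : x.+1 < n by lia.
  apply/existsP; exists (Ordinal hk); rewrite !inE andbT /=.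
  apply/andP; split; first by apply/eqP => /(congr1 val) /=; lia.
  apply/andP; lia.
have hn0 : 0 < n by lia.
have hn1 : n - 1 < n by lia.
case: (boolP ((0 < x) && (x.-1 != i))) => c1.
  have hk : x.-1 < n by lia.
  apply/existsP; exists (Ordinal hk); rewrite !inE andbT /=.
  apply/andP; split; first by apply/eqP => /(congr1 val) /=; lia.
  apply/orP; lia.
case: (boolP ((y.+1 < n) && (y.+1 != i))) => c2.
  have hk : y.+1 < n by lia.
  apply/existsP; exists (Ordinal hk); rewrite !inE andbT /=.
  apply/andP; split; first by apply/eqP => /(congr1 val) /=; lia.
  apply/orP; lia.
case: (boolP ((0 < x) && (0 != i))) => c3.
  apply/existsP; exists (Ordinal hn0); rewrite !inE andbT /=.
  apply/andP; split; first by apply/eqP => /(congr1 val) /=; lia.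
  apply/orP; lia.
case: (boolP ((y < n - 1) && (n - 1 != i))) => c4.
  apply/existsP; exists (Ordinal hn1); rewrite !inE andbT /=.
  apply/andP; split; first by apply/eqP => /(congr1 val) /=; lia.
  apply/orP; lia.
exfalso; clear h1 h2; move: c1 c2 c3 c4; rewrite !negb_and !negbK -!leqNgt => /orP[c1|/eqP c1] /orP[c2|/eqP c2] /orP[c3|/eqP c3] /orP[c4|/eqP c4]; lia.
Qed.

Lemma noncross_ear (e : 'I_n * 'I_n) : e.1 != i -> e.2 != i ->
  ~~ cross e (ear i) && ~~ cross (ear i) e.
Proof.
have E := earP; move: E; rewrite /=.
have hi := ltn_ord i.
case: (ear i) => a b /=; case: e => x y /=.
have ha := ltn_ord a; have hb := ltn_ord b; have hx := ltn_ord x; have hy := ltn_ord y.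
move=> E h1 h2.
have h1' : nat_of_ord x <> i by move=> h; move/eqP: h1; apply; exact: val_inj.
have h2' : nat_of_ord y <> i by move=> h; move/eqP: h2; apply; exact: val_inj.
rewrite /cross /=; apply/andP; split; apply/negP; lia.
Qed.

Lemma cross_inc (d : 'I_n * 'I_n) : is_diag [set: 'I_n] d -> (d.1 == i) || (d.2 == i) ->
  cross d (ear i).
Proof.
have E := earP; move: E; rewrite /=.
have hi := ltn_ord i.
move=> E /and5P[_ _ hxy /existsP[v /andP[_ /andP[hv1 hv2]]] /existsP[w /andP[_ hw]]] hinc.
move: E hxy hv1 hv2 hw hinc.
case: (ear i) => a b /=; case: d => x y /=.
have ha := ltn_ord a; have hb := ltn_ord b; have hx := ltn_ord x; have hy := ltn_ord y; have hv := ltn_ord v; have hw := ltn_ord w.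
move=> E hxy hv1 hv2 hw' /orP hinc.
have hinc' : nat_of_ord x = i \/ nat_of_ord y = i by case: hinc => /eqP ->; [left|right].
rewrite /cross /=; lia.
Qed.
End S.

Lemma diag_T n (V : {set 'I_n}) (e : 'I_n * 'I_n) : is_diag V e -> is_diag [set: 'I_n] e.
Proof.
case/and5P => _ _ h /existsP[v /andP[_ hv]] /existsP[w /andP[_ hw]].
rewrite /is_diag !inE h /=; apply/andP; split; apply/existsP; [exists v|exists w]; by rewrite inE.
Qed.

Theorem mainTheorem12 (n : nat) (B : {set 'I_n * 'I_n}) (i : 'I_n) :
  3 <= n ->
  nk_blocker (n - 1) B ->
  ear i \notin B ->
  deg B i = 2 ->
  blocker ([set: 'I_n] :\ i) (del_vertex B i) /\ #|del_vertex B i| = n - 3.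
Proof.
move=> n3 [[[Bsub Bmeet] _] cardB] earB degB.
have n4 : 4 <= n.
  case: (set_0Vmem B) => [B0|[e eB]]; first by rewrite B0 cards0 in cardB; lia.
  move: (Bsub e eB) => /and5P[_ _ h /existsP[v /andP[_ /andP[hv1 hv2]]] /existsP[w /andP[_ hw]]].
  have := ltn_ord e.2; have := ltn_ord w; move: h hv1 hv2 hw; move: (nat_of_ord e.1) (nat_of_ord e.2) (nat_of_ord v) (nat_of_ord w) => a b c d; lia.
have neB : forall e, e \in B -> e != ear i.
  by move=> e eB; apply/eqP => ee; rewrite -ee eB in earB.
split.
  split.
    move=> e; rewrite /del_vertex inE => /andP[eB /and3P[h1 h2 h3]].
    exact: diag_del (Bsub e eB) h1 h2 h3.
  move=> T [Tsub Tnc Tmax].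
  have Tend : forall e, e \in T -> (e.1 != i) && (e.2 != i).
    move=> e eT; case/and5P: (Tsub e eT); rewrite !inE.
    by move=> /andP[-> _] /andP[-> _].
  have tri : triangulation [set: 'I_n] (T :|: [set ear i]).
    split.
    - move=> e; rewrite !inE => /orP[eT|/eqP->]; [exact: diag_T (Tsub e eT) | exact: ear_diag].
    - move=> e f; rewrite !inE => /orP[eT|/eqP->] /orP[fT|/eqP->].
      + exact: Tnc.
      + by case/andP: (Tend e eT) => h1 h2; case/andP: (noncross_ear n4 h1 h2).
      + by case/andP: (Tend f fT) => h1 h2; case/andP: (noncross_ear n4 h1 h2).
      + by apply/negP; rewrite /cross; lia.
    - move=> d dd; rewrite !inE negb_or => /andP[dT dE].
      case: (boolP ((d.1 == i) || (d.2 == i))) => hinc.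
        exists (ear i); first by rewrite !inE eqxx orbT.
        exact: cross_inc.
      rewrite negb_or in hinc; case/andP: hinc => h1 h2.
      have dd' := diag_del n4 dd h1 h2 dE.
      case: (Tmax d dd' dT) => e eT ce; exists e => //; by rewrite inE eT.
  case: (Bmeet _ tri) => e eB; rewrite !inE => /orP[eT|/eqP ee]; last first.
    by rewrite -ee eB in earB.
  exists e => //; rewrite inE eB.
  by case/andP: (Tend e eT) => -> -> /=; rewrite neB.
have -> : del_vertex B i = B :\: [set e in B | (e.1 == i) || (e.2 == i)].
  apply/setP => e; rewrite /del_vertex !inE; case eB: (e \in B) => //=.
  by rewrite (negbTE (neB _ eB)) /= !andbT negb_or.
rewrite cardsD (setIidPr _); last by apply/subsetP => e; rewrite inE => /andP[].
have -> : #|[set e in B | (e.1 == i) || (e.2 == i)]| = 2 := degB.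
lia.
Qed.
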